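(* Let $p>1$, let $T_p(\mathbf{x})=\sum_{i=1}^M P(\theta_i|\mathbf{x})^{\frac{p}{p-1}}$, and define $$B_p^{(2)}=1-{\rm E}\Big[\Big(\sum_{i=1}^M P(\theta_i|\mathbf{x})^{\frac{p}{p-1}}\Big)^{\frac{p-1}{p}}\Big].$$ Then for every measurable $\zeta_2:\mathcal{X}\to(0,\infty)$ with ${\rm E}[\zeta_2(\mathbf{x})]<\infty$ and ${\rm E}\big[\zeta_2(\mathbf{x})^{\frac{1}{1-p}}T_p(\mathbf{x})\big]<\infty$, $$1-{\rm E}^{\frac1p}[\zeta_2(\mathbf{x})]\,{\rm E}^{\frac{p-1}{p}}\big[\zeta_2(\mathbf{x})^{\frac{1}{1-p}}T_p(\mathbf{x})\big]\le B_p^{(2)},$$ with equality when $\zeta_2=T_p^{\frac{p-1}{p}}$. Consequently, every detector satisfies $P_e\ge B_p^{(2)}$ for all $p>1$.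
   Context: $M$-ary hypothesis testing: the true hypothesis $\theta$ is a random variable with values in $\{\theta_1,\ldots,\theta_M\}$, $\mathbf{x}$ is a random observation in a measurable space $\mathcal{X}$, and $P(\theta_i|\mathbf{x})$ is the posterior probability of $\theta_i$ given $\mathbf{x}$, assumed to satisfy $P(\theta_i|\mathbf{x})>0$ for all $\mathbf{x}$, $i$. A detector is a measurable map $\hat\theta:\mathcal{X}\to\{\theta_1,\ldots,\theta_M\}$, and its probability of error is $P_e=\Pr(\hat\theta(\mathbf{x})\neq\theta)$. ${\rm E}^a[Y]$ denotes $({\rm E}[Y])^a$. *)

(* Defs.v *)
From HB Require Import structures.
From mathcomp Require Import all_boot all_order all_algebra.
From mathcomp Require Import all_classical all_reals all_analysis.
Set Implicit Arguments. Unset Strict Implicit. Unset Printing Implicit Defensive.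
Import Order.TTheory GRing.Theory Num.Theory.
Local Open Scope classical_set_scope.
Local Open Scope ring_scope.

Section Defs.
Context {d dX : measure_display} {R : realType}
  {Omega : measurableType d} {X : measurableType dX} {M : nat}.

(* post is (a version of) the posterior P(theta_i | x): it is a measurable
   probability vector in x, and for every measurable A,
   Pr(theta = i, x \in A) = E[ 1_{x \in A} post (x) i ]. *)
Definition is_posterior (P : probability Omega R) (theta : Omega -> 'I_M)
  (x : Omega -> X) (post : X -> 'I_M -> R) : Prop :=
  (forall i, measurable_fun setT (fun y => post y i)) /\
  (forall y, \sum_(i < M) post y i = 1) /\
  (forall i (A : set X), measurable A ->
     P ([set w | theta w = i] `&` (x @^-1` A)) =
     (\int[P]_(w in x @^-1` A) (post (x w) i)%:E)%E).

Definition Tp (post : X -> 'I_M -> R) (p : R) (y : X) : R :=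
  \sum_(i < M) (post y i) `^ (p / (p - 1)).

Definition Bp2 (P : probability Omega R) (x : Omega -> X)
  (post : X -> 'I_M -> R) (p : R) : R :=
  1 - fine (\int[P]_w ((Tp post p (x w)) `^ ((p - 1) / p))%:E)%E.

Definition is_detector (dt : X -> 'I_M) : Prop :=
  forall i, measurable (dt @^-1` [set i]).

Definition Perr (P : probability Omega R) (theta : Omega -> 'I_M)
  (x : Omega -> X) (dt : X -> 'I_M) : R :=
  fine (P [set w | dt (x w) <> theta w]).

End Defs.

(* Main.v *)
From HB Require Import structures.
From mathcomp Require Import all_boot all_order all_algebra.
From mathcomp Require Import all_classical all_reals all_analysis.
Require Import Defs.
Import Order.TTheory GRing.Theory Num.Theory.
Local Open Scope classical_set_scope.
Local Open Scope ring_scope.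
From mathcomp Require Import ring lra measurable_realfun.

Lemma post_le1 (R : realType) (X : Type) (M : nat) (post : X -> 'I_M -> R) y i :
  (forall j, 0 < post y j) -> \sum_(j < M) post y j = 1 -> post y i <= 1.
Proof.
move=> Hp Hs; rewrite -Hs (bigD1 i) //= lerDl sumr_ge0 // => j _; exact: ltW.
Qed.

Lemma Tp_bounds (R : realType) (dX : measure_display) (X : measurableType dX) (M : nat)
  (post : X -> 'I_M -> R) (p : R) y :
  1 < p -> (forall j, 0 < post y j) -> \sum_(j < M) post y j = 1 ->
  0 < Tp post p y /\ Tp post p y <= 1 /\
  (forall i, post y i <= (Tp post p y) `^ ((p - 1) / p)).
Proof.
move=> p1 Hp Hs.
have q1 : 1 <= p / (p - 1).
  by rewrite ler_pdivlMr ?subr_gt0 // mul1r gerBl.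
have Mgt0 : (0 < M)%N.
  case: M post Hp Hs => // post Hp; rewrite big_ord0 => /eqP; rewrite eq_sym oner_eq0 //.
pose i0 : 'I_M := Ordinal Mgt0.
have leT i : post y i `^ (p / (p - 1)) <= Tp post p y.
  rewrite /Tp (bigD1 i) //= lerDl sumr_ge0 // => j _; exact: powR_ge0.
split.
  apply: (lt_le_trans _ (leT i0)); exact: powR_gt0.
split.
  rewrite -Hs /Tp; apply: ler_sum => j _.
  apply: ge1r_powR => //; rewrite Hp /=; exact: post_le1.
move=> i.
have -> : post y i = (post y i `^ (p / (p - 1))) `^ ((p - 1) / p).
  rewrite -powRrM mulrA divfK ?subr_eq0 ?gt_eqF // mulfV ?gt_eqF ?(lt_trans ltr01) //.
  by rewrite powRr1 // ltW.
apply: ge0_ler_powR => //.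
- by rewrite divr_ge0 // ?subr_ge0 ltW // (lt_trans ltr01).
- by rewrite nnegrE powR_ge0.
- by rewrite nnegrE /Tp sumr_ge0 // => j _; exact: powR_ge0.
Qed.

Lemma hoelder_real d (T : measurableType d) (R : realType)
  (mu : {measure set T -> \bar R}) (f g : T -> R) (p q : R) :
  measurable_fun setT f -> measurable_fun setT g ->
  (forall t, 0 <= f t) -> (forall t, 0 <= g t) ->
  0 < p -> 0 < q -> p^-1 + q^-1 = 1 ->
  (\int[mu]_t (f t `^ p)%:E < +oo)%E -> (\int[mu]_t (g t `^ q)%:E < +oo)%E ->
  (\int[mu]_t (f t * g t)%:E <=
    ((fine (\int[mu]_t (f t `^ p)%:E)) `^ p^-1 *
     (fine (\int[mu]_t (g t `^ q)%:E)) `^ q^-1)%:E)%E.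
Proof.
move=> mf mg f0 g0 p0 q0 pq fi gi.
have H := hoelder mu mf mg p0 q0 pq.
rewrite Lnorm1 unlock /Lnorm in H.
have e1 : forall (h : T -> R) r, (forall t, 0 <= h t) ->
   (\int[mu]_x `|(EFin \o h) x| `^ r)%E = (\int[mu]_t (h t `^ r)%:E)%E.
  move=> h r h0; apply: eq_integral => t _ /=.
  by rewrite ger0_norm.
rewrite !e1 // in H.
have e2 : (\int[mu]_x `|(EFin \o (f \* g)%R) x|)%E = (\int[mu]_t (f t * g t)%:E)%E.
  apply: eq_integral => t _ /=.

 by rewrite ger0_norm // mulr_ge0.
rewrite e2 in H; apply: (le_trans H).
have ge0 (h : T -> R) r : (0 <= \int[mu]_t (h t `^ r)%:E)%E.
  by apply: integral_ge0 => t _; rewrite lee_fin powR_ge0.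
rewrite -[X in (X `^ _ * _)%E]fineK ?ge0_fin_numE ?ge0 //.
rewrite -[X in (_ * X `^ _)%E]fineK ?ge0_fin_numE ?ge0 //.
Qed.

Lemma mem_bigsetU (T : Type) (I : eqType) (s : seq I) (F : I -> set T) w :
  (\big[setU/set0]_(i <- s) F i) w <-> exists2 i, i \in s & F i w.
Proof.
elim: s => [|a s IH]; rewrite ?big_nil ?big_cons; split.
- by [].
- by case.
- case=> [Ha|/IH [i Hi Fi]]; first by exists a => //; rewrite mem_head.
  by exists i => //; rewrite in_cons Hi orbT.
- case=> i; rewrite in_cons => /orP [/eqP ->|Hi] Fi; first by left.
  by right; apply/IH; exists i.
Qed.

Theorem mainTheorem6 (d dX : measure_display) (R : realType)
  (Omega : measurableType d) (X : measurableType dX) (M : nat)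
  (P : probability Omega R) (theta : Omega -> 'I_M) (x : Omega -> X)
  (post : X -> 'I_M -> R) (p : R) :
  measurable_fun setT x ->
  (forall i, measurable [set w | theta w = i]) ->
  is_posterior P theta x post ->
  (forall y i, 0 < post y i) ->
  1 < p ->
  (* the bound for an arbitrary admissible zeta_2 *)
  (forall zeta : X -> R,
     measurable_fun setT zeta ->
     (forall y, 0 < zeta y) ->
     (\int[P]_w (zeta (x w))%:E < +oo)%E ->
     (\int[P]_w ((zeta (x w)) `^ (1 / (1 - p)) * Tp post p (x w))%:E < +oo)%E ->
     1 - (fine (\int[P]_w (zeta (x w))%:E)%E) `^ (1 / p) *
         (fine (\int[P]_w ((zeta (x w)) `^ (1 / (1 - p)) * Tp post p (x w))%:E)%E)
           `^ ((p - 1) / p)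
     <= Bp2 P x post p) /\
  (* equality for zeta_2 = T_p^{(p-1)/p} *)
  (let zeta := fun y => (Tp post p y) `^ ((p - 1) / p) in
     1 - (fine (\int[P]_w (zeta (x w))%:E)%E) `^ (1 / p) *
         (fine (\int[P]_w ((zeta (x w)) `^ (1 / (1 - p)) * Tp post p (x w))%:E)%E)
           `^ ((p - 1) / p)
     = Bp2 P x post p) /\
  (* every detector has error probability at least B_p^(2) *)
  (forall dt : X -> 'I_M, is_detector dt -> Bp2 P x post p <= Perr P theta x dt).
Proof.
move=> mx mth [mpost [sum1 joint]] post0 p1.
have p0 : 0 < p by apply: lt_trans p1.
have pm1 : 0 < p - 1 by rewrite subr_gt0.
have TB y := @Tp_bounds R dX X M post p y p1 (post0 y) (sum1 y).
have mT : measurable_fun setT (Tp post p).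
  rewrite /Tp; apply: measurable_sum => i.
  exact: measurableT_comp (measurable_realfun.measurable_powR _) (mpost i).
pose h w := (Tp post p (x w)) `^ ((p - 1) / p).
have mh : measurable_fun setT h.
  exact: measurableT_comp (measurable_realfun.measurable_powR _) (measurableT_comp mT mx).
have h0 w : 0 <= h w by apply: powR_ge0.
have h1 w : h w <= 1.
  have [T0 [T1 _]] := TB (x w).
  rewrite /h; apply: (@le_trans _ _ (1 `^ ((p - 1) / p))); last by rewrite powR1.
  apply: ge0_ler_powR => //.
  - by rewrite divr_ge0 // ltW.
  - by rewrite nnegrE ltW.
  - by rewrite nnegrE.
pose I := (\int[P]_w (h w)%:E)%E.
have I0 : (0 <= I)%E by apply: integral_ge0 => t _; rewrite lee_fin.
have I1 : (I <= 1)%E.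
  apply: (@le_trans _ _ (\int[P]_w (cst 1%E w))%E).
    apply: ge0_le_integral => //.
    all: try (by move=> t _; rewrite /cst lee_fin ?h1).
    all: try exact/measurable_EFinP.
  have := @integral_cst _ _ _ P setT measurableT 1%E.
  move=> ->; rewrite mul1e; first [by rewrite probability_setT | by rewrite (@probability_setT _ _ _ P) | exact: sprobability_setT].
have Ifin : I \is a fin_num by rewrite ge0_fin_numE // (le_lt_trans I1) // ltey.
have BpE : Bp2 P x post p = 1 - fine I by [].
have pn0 : p != 0 by rewrite gt_eqF.
have pm1n0 : p - 1 != 0 by rewrite gt_eqF.
have p1n0 : 1 - p != 0 by rewrite subr_eq0 eq_sym gt_eqF.
split; last split.
- move=> zeta mz z0 zi1 zi2; rewrite BpE.
  pose A := (\int[P]_w (zeta (x w))%:E)%E.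
  pose B := (\int[P]_w ((zeta (x w)) `^ (1 / (1 - p)) * Tp post p (x w))%:E)%E.
  have mzx : measurable_fun setT (fun w => zeta (x w)).
    exact: measurableT_comp mz mx.
  have mTx : measurable_fun setT (fun w => Tp post p (x w)).
    exact: measurableT_comp mT mx.
  have eA : (\int[P]_t (((zeta (x t)) `^ (1 / p)) `^ p)%:E)%E = A.
    apply: eq_integral => t _; congr EFin.
    by rewrite -powRrM div1r mulVf // powRr1 // ltW.
  have eB : (\int[P]_t (((zeta (x t) `^ (1 / (1 - p)) * Tp post p (x t))
              `^ ((p - 1) / p)) `^ (p / (p - 1)))%:E)%E = B.
    apply: eq_integral => t _; congr EFin.
    rewrite -powRrM (_ : (p - 1) / p * (p / (p - 1)) = 1); last by field; rewrite ?pn0 ?pm1n0 ?p1n0.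
    rewrite powRr1 // mulr_ge0 ?powR_ge0 //; have [T0 _] := TB (x t); exact: ltW.
  have eC : (\int[P]_t ((zeta (x t)) `^ (1 / p) *
              (zeta (x t) `^ (1 / (1 - p)) * Tp post p (x t)) `^ ((p - 1) / p))%:E)%E = I.
    apply: eq_integral => t _; congr EFin.
    have [T0 _] := TB (x t).
    rewrite powRM ?powR_ge0 ?ltW // -powRrM mulrA -powRD; last first.
      by rewrite (gt_eqF (z0 _)) implybT.
    rewrite (_ : 1 / p + 1 / (1 - p) * ((p - 1) / p) = 0); last by field; rewrite ?pn0 ?pm1n0 ?p1n0.
    by rewrite powRr0 mul1r.
  have H : (I <= ((fine A) `^ p^-1 * (fine B) `^ (p / (p - 1))^-1)%:E)%E.
    rewrite -eA -eB -eC; apply: hoelder_real.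
    - exact: measurableT_comp (measurable_powR _) mzx.
    - apply: measurableT_comp (measurable_powR _) _.
      exact: measurable_funM (measurableT_comp (measurable_powR _) mzx) mTx.
    - by move=> t; apply: powR_ge0.
    - by move=> t; apply: powR_ge0.
    - exact: p0.
    - by rewrite divr_gt0.
    - by rewrite invf_div; field.
    - by rewrite eA.
    - by rewrite eB.
  have := fine_le Ifin _ H; rewrite /= => /(_ isT).
  rewrite div1r invf_div; lra.
- move=> zeta; rewrite BpE.
  have e1 : (\int[P]_w (zeta (x w))%:E)%E = I by [].
  have e2 : (\int[P]_w ((zeta (x w)) `^ (1 / (1 - p)) * Tp post p (x w))%:E)%E = I.
    apply: eq_integral => t _; congr EFin.
    have [T0 _] := TB (x t).
    rewrite /zeta -powRrM -[X in _ * X](powRr1 (ltW T0)) -powRD; last first.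
      by rewrite (gt_eqF T0) implybT.
    by congr (_ `^ _); field; rewrite ?pn0 ?pm1n0 ?p1n0.
  rewrite e1 e2 -powRD; last by rewrite (_ : 1 / p + (p - 1) / p = 1) ?oner_eq0 //; field; rewrite ?pn0.
  rewrite (_ : 1 / p + (p - 1) / p = 1); last by field; rewrite ?pn0.
  by rewrite powRr1 // fine_ge0.
- move=> dt hdt; rewrite BpE /Perr.
  pose E := [set w | dt (x w) = theta w].
  pose Bi i := x @^-1` (dt @^-1` [set i]).
  have mB i : measurable (Bi i).
    by rewrite -[Bi i]setTI; exact: mx measurableT _ (hdt i).
  pose Ai i := [set w | theta w = i] `&` Bi i.
  have mA i : measurable (Ai i) by exact: measurableI (mth i) (mB i).
  have EU : E = \big[setU/set0]_(i < M) Ai i.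
    apply/seteqP; split=> w.
    - move=> Ew; apply/mem_bigsetU; exists (theta w); first exact: mem_index_enum.
      by split.
    - by move/mem_bigsetU => [i _ [th Bw]]; rewrite /E /= th.
  have trivA : trivIset setT Ai.
    by move=> i j _ _ [w [[_ Hi] [_ Hj]]]; rewrite -Hi -Hj.
  have trivB : trivIset [set` index_enum 'I_M] Bi.
    by move=> i j _ _ [w [Hi Hj]]; rewrite -Hi -Hj.
  have mE : measurable E by rewrite EU; exact: bigsetU_measurable.
  have PE : P E = (\sum_(i < M) P (Ai i))%E by rewrite EU measure_bigsetU_ord.
  have le_i i : (P (Ai i) <= \int[P]_(w in Bi i) (h w)%:E)%E.
    rewrite (joint i _ (hdt i)); apply: (ge0_le_integral _ (mB i)).
    - by move=> t _; rewrite lee_fin ltW.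
    - apply/measurable_EFinP; apply: measurable_funTS.
      exact: measurableT_comp (mpost i) mx.
    - by apply/measurable_EFinP; apply: measurable_funTS.
    - move=> t _; rewrite lee_fin; have [_ [_ H]] := TB (x t); exact: H.
  have sumI : (\sum_(i < M) \int[P]_(w in Bi i) (h w)%:E)%E = I.
    have := @ge0_integral_bigsetU _ _ _ P _ Bi (fun w => (h w)%:E)
      (index_enum 'I_M) mB (index_enum_uniq _) trivB.
    rewrite /= (_ : \big[setU/set0]_(i <- index_enum 'I_M) Bi i = setT); last first.
      apply/seteqP; split=> // w _; apply/mem_bigsetU; exists (dt (x w)) => //.
    move=> H; rewrite /I H //; last by move=> t _; rewrite lee_fin.
    by apply/measurable_EFinP.
  have PEI : (P E <= I)%E.
    by rewrite PE -sumI; apply: lee_sum => i _; exact: le_i.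
  have PEfin : P E \is a fin_num.
    by rewrite ge0_fin_numE ?measure_ge0 // (le_lt_trans PEI) // (le_lt_trans I1) // ltey.
  have -> : [set w | dt (x w) <> theta w] = ~` E by [].
  rewrite probability_setC // (@fineB _ 1%E (P E)) //.
  by apply: lerB => //; exact: fine_le PEfin Ifin PEI.
Qed.
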